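(* Let $T>0$, $n_0>0$, $\alpha>0$ and $P>0$. For each integer $k\ge1$ let $\omega_k>0$ be the unique positive solution of $2\arctan(\omega_k/\alpha)=k\pi-\omega_k T$, and set $\lambda_k=\frac{2\alpha P}{\alpha^2+\omega_k^2}$ (these are the Mercer eigenvalues on $[0,T]$ of the kernel $R_X(t_1,t_2)=P e^{-\alpha|t_1-t_2|}$). Define $$C(T)=\frac1{2T}\sum_{k=1}^{\infty}\log\left(1+\frac{\lambda_k}{n_0/2}\right),\qquad C_{\mathrm{sh}}=\frac1{4\pi}\int_{-\infty}^{\infty}\log\left(1+\frac{\frac{2P\alpha}{\alpha^2+\omega^2}}{n_0/2}\right)\mathrm{d}\omega .$$ Then for any fixed $T,n_0,\alpha>0$ there exists $\delta>0$ such that $C(T)>C_{\mathrm{sh}}$ holds strictly for every $P$ with $0<P<\delta$.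
   Context: Setting: the transmitted signal is a zero-mean stationary Gaussian process with autocorrelation $R_X(\tau)=Pe^{-\alpha|\tau|}$ (power spectral density $S_X(\omega)=2P\alpha/(\alpha^2+\omega^2)$), corrupted by additive white Gaussian noise of power spectral density $n_0/2$; $C(T)$ is the finite-time transmission rate over the window $[0,T]$ and $C_{\mathrm{sh}}$ is the Shannon capacity. Logarithms are natural. *)

(* Defs.v *)
From Stdlib Require Import Reals.
From Coquelicot Require Import Coquelicot.
Open Scope R_scope.

Definition lam (alpha P wk : R) : R := 2 * alpha * P / (alpha ^ 2 + wk ^ 2).

Definition is_omega (T alpha : R) (k : nat) (w : R) : Prop :=
  0 < w /\ 2 * atan (w / alpha) = INR k * PI - w * T.

Definition CT (T n0 alpha P : R) (omega : nat -> R) : R :=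
  / (2 * T) * Series (fun n => ln (1 + lam alpha P (omega (S n)) / (n0 / 2))).

Definition Csh (n0 alpha P : R) : R :=
  / (4 * PI) *
  RInt_gen (fun w => ln (1 + (2 * P * alpha / (alpha ^ 2 + w ^ 2)) / (n0 / 2)))
    (Rbar_locally m_infty) (Rbar_locally p_infty).

(* Main.v *)
Require Import Defs.
From Stdlib Require Import Reals Lra Lia Arith.
From Stdlib Require Import FunctionalExtensionality ClassicalEpsilon.
From Coquelicot Require Import Coquelicot.
Open Scope R_scope.

Fixpoint Pd (d:nat) (f:R->R) : Prop :=
  match d with
  | O => exists c, forall x, f x = c
  | S d' => exists c g, Pd d' g /\ forall x, f x = c + x * g x
  end.

Lemma Pd_ext d f g : Pd d f -> (forall x, g x = f x) -> Pd d g.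
Proof.
  destruct d as [|d]; simpl.
  - intros [c Hc] H. exists c. intros x; rewrite H; auto.
  - intros [c [h [Hh Hc]]] H. exists c, h. split; auto. intros x; rewrite H; auto.
Qed.

Lemma Pd_const d c : Pd d (fun _ => c).
Proof.
  induction d; simpl.
  - exists c; auto.
  - exists c, (fun _ => 0). split.
    + clear IHd. induction d; simpl. exists 0; auto. exists 0, (fun _ => 0); split; auto. intros; ring.
    + intros; ring.
Qed.

Lemma Pd_S d f : Pd d f -> Pd (S d) f.
Proof.
  revert f; induction d; intros f H.
  - destruct H as [c Hc]. simpl. exists c, (fun _ => 0). split. exists 0; auto.
    intros x; rewrite Hc; ring.
  - destruct H as [c [g [Hg Hf]]]. exists c, g. split; auto.
Qed.

Lemma Pd_le d d' f : (d <= d')%nat -> Pd d f -> Pd d' f.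
Proof. induction 1; auto. intros; apply Pd_S; auto. Qed.

Lemma Pd_plus d f g : Pd d f -> Pd d g -> Pd d (fun x => f x + g x).
Proof.
  revert f g; induction d; intros f g Hf Hg.
  - destruct Hf as [c Hc], Hg as [e He]. exists (c+e). intros; rewrite Hc, He; auto.
  - destruct Hf as [c [f' [Hf' Hf]]], Hg as [e [g' [Hg' Hg]]].
    exists (c+e), (fun x => f' x + g' x). split; auto.
    intros; rewrite Hf, Hg; ring.
Qed.

Lemma Pd_scal d k f : Pd d f -> Pd d (fun x => k * f x).
Proof.
  revert f; induction d; intros f Hf.
  - destruct Hf as [c Hc]. exists (k*c). intros; rewrite Hc; auto.
  - destruct Hf as [c [f' [Hf' Hf]]]. exists (k*c), (fun x => k * f' x). split; auto.
    intros; rewrite Hf; ring.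
Qed.

Lemma Pd_mulx d f : Pd d f -> Pd (S d) (fun x => x * f x).
Proof. intros H. exists 0, f. split; auto. intros; ring. Qed.

Lemma Pd_div d f r : Pd (S d) f -> exists q, Pd d q /\ forall x, f x = (x - r) * q x + f r.
Proof.
  revert f; induction d; intros f Hf.
  - destruct Hf as [c [g [[c' Hg] Hf]]]. exists (fun _ => c'). split. exists c'; auto.
    intros x. rewrite !Hf, !Hg. ring.
  - destruct Hf as [c [g [Hg Hf]]].
    destruct (IHd g Hg) as [q' [Hq' Hgq]].
    exists (fun x => g r + x * q' x). split.
    + exists (g r), q'. split; auto.
    + intros x. rewrite !Hf, (Hgq x). ring.
Qed.

Fixpoint prodk (g : nat -> R) (m : nat) : R :=
  match m with O => 1 | S m' => prodk g m' * g (S m') end.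

Fixpoint sumk (g : nat -> R) (m : nat) : R :=
  match m with O => 0 | S m' => sumk g m' + g (S m') end.

Lemma Pd_factor m : forall f (rho : nat -> R), Pd m f ->
  (forall k, (1 <= k <= m)%nat -> f (rho k) = 0) ->
  (forall i j, (1 <= i <= m)%nat -> (1 <= j <= m)%nat -> i <> j -> rho i <> rho j) ->
  exists C, forall x, f x = C * prodk (fun k => x - rho k) m.
Proof.
  induction m; intros f rho Hf Hr Hd.
  - destruct Hf as [c Hc]. exists c. intros; simpl; rewrite Hc; ring.
  - destruct (Pd_div m f (rho (S m)) Hf) as [q [Hq Hfq]].
    assert (Hfr : f (rho (S m)) = 0) by (apply Hr; lia).
    destruct (IHm q rho Hq) as [C HC].
    + intros k Hk. assert (H1 : f (rho k) = 0) by (apply Hr; lia).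
      rewrite Hfq, Hfr in H1.
      assert (H2 : rho k - rho (S m) <> 0).
      { intros H3. apply (Hd k (S m)); try lia. lra. }
      rewrite Rplus_0_r in H1. apply Rmult_integral in H1. destruct H1 as [H1|H1]; [contradiction|lra].
    + intros i j Hi Hj Hij. apply Hd; lia.
    + exists C. intros x. rewrite Hfq, Hfr, HC. simpl. ring.
Qed.

Fixpoint AB (a c u : R) (j:nat) : R*R :=
  match j with
  | O => (a^2 - u, 2*a)
  | S j' => let p := AB a c u j' in (fst p - c*u*snd p, snd p + c*fst p)
  end.

Lemma AB_S a c u j : AB a c u (S j) =
  (fst (AB a c u j) - c*u*snd (AB a c u j), snd (AB a c u j) + c*fst (AB a c u j)).
Proof. reflexivity. Qed.

Lemma Pd_stepA d f g c : Pd (S d) f -> Pd d g -> Pd (S d) (fun u => f u - c*u*g u).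
Proof.
  intros Hf Hg. apply Pd_ext with (fun u => f u + (-c) * (u * g u)).
  apply Pd_plus; auto. apply Pd_scal. apply Pd_mulx; auto.
  intros; ring.
Qed.

Lemma Pd_stepB d f g c : Pd d f -> Pd d g -> Pd d (fun u => g u + c*f u).
Proof.
  intros Hf Hg. apply Pd_plus; auto. apply Pd_scal; auto.
Qed.

Lemma AB_Pd a c i :
  Pd (S i) (fun u => fst (AB a c u (2*i))) /\ Pd i (fun u => snd (AB a c u (2*i))) /\
  Pd (S i) (fun u => fst (AB a c u (S (2*i)))) /\ Pd (S i) (fun u => snd (AB a c u (S (2*i)))).
Proof.
  induction i.
  - assert (HA0 : Pd 1 (fun u => a^2 - u)).
    { exists (a^2), (fun _ => -1). split. exists (-1); auto. intros; ring. }
    assert (HB0 : Pd 0 (fun _ : R => 2*a)) by (exists (2*a); auto).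
    split; [|split; [|split]].
    + exact HA0.
    + exact HB0.
    + eapply Pd_ext. apply Pd_stepA with (c := c); [exact HA0|exact HB0]. intros; reflexivity.
    + eapply Pd_ext. apply Pd_stepB with (c := c); [exact HA0|apply Pd_S; exact HB0]. intros; reflexivity.
  - destruct IHi as [H1 [H2 [H3 H4]]].
    replace (2 * S i)%nat with (S (S (2*i))) by lia.
    assert (HA : Pd (S (S i)) (fun u => fst (AB a c u (S (S (2*i)))))).
    { eapply Pd_ext. apply Pd_stepA with (c := c); [apply Pd_S; exact H3| exact H4].
      intros; rewrite AB_S; reflexivity. }
    assert (HB : Pd (S i) (fun u => snd (AB a c u (S (S (2*i)))))).
    { eapply Pd_ext. apply Pd_stepB with (c := c); [exact H3| exact H4].
      intros; rewrite AB_S; reflexivity. }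
    split; [exact HA|split; [exact HB|split]].
    + eapply Pd_ext. apply Pd_stepA with (c := c); [exact HA| exact HB].
      intros; rewrite (AB_S a c _ (S (S _))); reflexivity.
    + eapply Pd_ext. apply Pd_stepB with (c := c); [exact HA| apply Pd_S; exact HB].
      intros; rewrite (AB_S a c _ (S (S _))); reflexivity.
Qed.

Lemma AB_imag a c s j :
  (a+s)^2 * (1+c*s)^j = fst (AB a c (-(s^2)) j) + s * snd (AB a c (-(s^2)) j) /\
  (a-s)^2 * (1-c*s)^j = fst (AB a c (-(s^2)) j) - s * snd (AB a c (-(s^2)) j).
Proof.
  induction j.
  - simpl. split; ring.
  - rewrite AB_S. cbn [fst snd]. destruct IHj as [H1 H2].
    set (A := fst (AB a c (-(s^2)) j)) in *. set (B := snd (AB a c (-(s^2)) j)) in *.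
    rewrite <- (tech_pow_Rmult (1+c*s)), <- (tech_pow_Rmult (1-c*s)). split.
    + replace ((a + s) ^ 2 * ((1 + c * s) * (1 + c * s) ^ j)) with ((1+c*s) * ((a + s) ^ 2 * (1 + c * s) ^ j)) by ring.
      rewrite H1. ring.
    + replace ((a - s) ^ 2 * ((1 - c * s) * (1 - c * s) ^ j)) with ((1-c*s) * ((a - s) ^ 2 * (1 - c * s) ^ j)) by ring.
      rewrite H2. ring.
Qed.

Lemma AB_polar a c w j : 0 < a ->
  fst (AB a c (w^2) j) = (a^2+w^2) * (sqrt (1+(c*w)²))^j * cos (2*atan (w/a) + INR j * atan (c*w)) /\
  w * snd (AB a c (w^2) j) = (a^2+w^2) * (sqrt (1+(c*w)²))^j * sin (2*atan (w/a) + INR j * atan (c*w)).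
Proof.
  intros ha. induction j.
  - simpl INR. rewrite Rmult_0_l, Rplus_0_r. rewrite pow_O, Rmult_1_r.
    rewrite cos_2a, sin_2a, cos_atan, sin_atan.
    set (t := w/a). assert (Hq : 0 < 1 + t²) by (unfold Rsqr; nra).
    pose proof (sqrt_sqrt (1+t²) (Rlt_le _ _ Hq)) as Hs.
    pose proof (sqrt_lt_R0 _ Hq) as Hs0.
    set (q := sqrt (1+t²)) in *.
    cbn [AB fst snd]. split.
    + replace (1 / q * (1 / q) - t / q * (t / q)) with ((1 - t*t)/(q*q)) by (field; lra).
      rewrite Hs. unfold t, Rsqr. field. split; [lra|nra].
    + replace (2 * (t / q) * (1 / q)) with ((2*t)/(q*q)) by (field; lra).
      rewrite Hs. unfold t, Rsqr. field. split; [lra|nra].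
  - rewrite AB_S. cbn [fst snd]. destruct IHj as [H1 H2].
    rewrite S_INR.
    replace (2 * atan (w / a) + (INR j + 1) * atan (c * w)) with
      ((2 * atan (w / a) + INR j * atan (c * w)) + atan (c*w)) by ring.
    set (x := c*w) in *.
    set (ph := 2 * atan (w / a) + INR j * atan x) in *.
    rewrite (cos_plus ph (atan x)), (sin_plus ph (atan x)), cos_atan, sin_atan.
    assert (Hq : 0 < 1 + x²) by (unfold Rsqr; nra).
    pose proof (sqrt_lt_R0 _ Hq) as Hs0.
    set (q := sqrt (1+x²)) in *.
    rewrite <- (tech_pow_Rmult q j). split.
    + replace (c * w ^ 2 * snd (AB a c (w ^ 2) j)) with (x * (w * snd (AB a c (w ^ 2) j))) by (unfold x; ring).
      rewrite H1, H2. field. lra.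
    + replace (w * (snd (AB a c (w ^ 2) j) + c * fst (AB a c (w ^ 2) j))) with
        (w * snd (AB a c (w ^ 2) j) + x * fst (AB a c (w ^ 2) j)) by (unfold x; ring).
      rewrite H1, H2. field. lra.
Qed.

Definition phiN (a c : R) (N : nat) (w : R) := 2 * atan (w/a) + INR N * atan (c*w).

Lemma atan_le_of x y : x <= y -> atan x <= atan y.
Proof. intros [H|H]. left; apply atan_increasing; auto. subst; lra. Qed.

Lemma root_exists a T i k : 0 < a -> 0 < T -> (1 <= k <= S i)%nat ->
  exists w, 0 < w /\ phiN a (T / INR (S (2*i))) (S (2*i)) w = INR k * PI.
Proof.
  intros ha hT hk.
  set (N := S (2*i)). set (c := T / INR N).
  assert (hN : 0 < INR N) by (apply lt_0_INR; unfold N; lia).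
  assert (hc : 0 < c) by (unfold c; apply Rdiv_lt_0_compat; lra).
  assert (hPI := PI_RGT_0).
  assert (hi : 0 < INR (2*i+3)) by (apply lt_0_INR; lia).
  set (th := PI/2 - PI/(4 * INR (2*i+3))).
  assert (hth1 : 0 < th).
  { unfold th. assert (1 <= INR (2*i+3)) by (apply (le_INR 1); lia).
    assert (PI / (4 * INR (2 * i + 3)) <= PI/4).
    { unfold Rdiv. apply Rmult_le_compat_l; [lra|]. apply Rinv_le_contravar; lra. }
    lra. }
  assert (hth2 : th < PI/2).
  { unfold th. assert (0 < PI / (4 * INR (2 * i + 3))) by (apply Rdiv_lt_0_compat; lra). lra. }
  assert (htan := tan_gt_0 th hth1 hth2).
  set (y := (a + /c) * tan th).
  assert (hy : 0 < y) by (unfold y; apply Rmult_lt_0_compat; [assert (0 < /c) by (apply Rinv_0_lt_compat; lra); lra| lra]).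
  assert (Hat : forall z, tan th <= z -> th <= atan z).
  { intros z Hz. rewrite <- (atan_tan th) by lra. apply atan_le_of; auto. }
  assert (H1 : th <= atan (y/a)).
  { apply Hat. unfold y. replace ((a + / c) * tan th / a) with (tan th + tan th / (c*a)) by (field; lra).
    assert (0 < tan th/(c*a)) by (apply Rdiv_lt_0_compat; nra). lra. }
  assert (H2 : th <= atan (c*y)).
  { apply Hat. unfold y. replace (c * ((a + / c) * tan th)) with (c*a*tan th + tan th) by (field; lra).
    assert (0 < c*a*tan th) by (apply Rmult_lt_0_compat; [nra|lra]). lra. }
  assert (Hphi : INR (S i) * PI < phiN a c N y).
  { unfold phiN.
    assert (INR N * th <= INR N * atan (c*y)) by (apply Rmult_le_compat_l; lra).
    assert (E : INR (2*i+3) = INR N + 2) by (unfold N; rewrite !plus_INR, !S_INR, mult_INR; simpl; ring).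
    assert (E2 : INR (S i) * PI = INR (2*i+3) * (PI/2) - PI/2).
    { rewrite plus_INR, mult_INR, S_INR. simpl. field. }
    assert (INR (2*i+3) * th = INR (2*i+3) * (PI/2) - PI/4) by (unfold th; field; lra).
    rewrite E in *. nra. }
  assert (Hk : INR k * PI <= INR (S i) * PI).
  { apply Rmult_le_compat_r; [lra|]. apply le_INR; lia. }
  assert (hk0 : 0 < INR k) by (apply lt_0_INR; lia).
  destruct (IVT (fun w => phiN a c N w - INR k * PI) 0 y) as [z [Hz1 Hz2]].
  - intros x. apply continuity_pt_filterlim.
    apply (@ex_derive_continuous R_AbsRing R_NormedModule (fun w => phiN a c N w - INR k * PI) x).
    unfold phiN. auto_derive. auto.
  - lra.
  - unfold phiN. rewrite Rmult_0_r, Rdiv_0_l, atan_0. nra.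
  - lra.
  - exists z. split; [|lra]. destruct Hz1 as [[Hz1|Hz1] _]; auto.
    subst z. unfold phiN in Hz2. rewrite Rmult_0_r, Rdiv_0_l, atan_0 in Hz2. nra.
Qed.

Lemma atan_le_id z : 0 <= z -> atan z <= z.
Proof.
  intros hz.
  destruct (MVT_gen (fun x => x - atan x) 0 z (fun x => 1 - /(1+x²))) as [c [Hc Hm]].
  - intros x _. auto_derive. auto. unfold Rsqr. field. nra.
  - intros x _. apply continuity_pt_filterlim.
    apply (@ex_derive_continuous R_AbsRing R_NormedModule (fun x => x - atan x) x). auto_derive. auto.
  - rewrite atan_0 in Hm.
    assert (0 <= 1 - / (1 + c²)).
    { assert (1 <= 1 + c²) by (unfold Rsqr; nra).
      assert (/ (1 + c²) <= 1). { rewrite <- Rinv_1. apply Rinv_le_contravar; lra. } lra. }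
    nra.
Qed.

Lemma prodk_ext g h m : (forall k, (1 <= k <= m)%nat -> g k = h k) -> prodk g m = prodk h m.
Proof.
  induction m; intros H; simpl; auto. rewrite IHm by (intros; apply H; lia). rewrite H by lia. auto.
Qed.

Lemma sumk_le g h m : (forall k, (1 <= k <= m)%nat -> g k <= h k) -> sumk g m <= sumk h m.
Proof.
  induction m; intros H; simpl. lra.
  assert (sumk g m <= sumk h m) by (apply IHm; intros; apply H; lia).
  assert (g (S m) <= h (S m)) by (apply H; lia). lra.
Qed.

Lemma prodk_pos g m : (forall k, (1 <= k <= m)%nat -> 0 < g k) -> 0 < prodk g m.
Proof.
  induction m; intros H; simpl. lra.
  apply Rmult_lt_0_compat. apply IHm; intros; apply H; lia. apply H; lia.
Qed.

Lemma ln_prodk g m : (forall k, (1 <= k <= m)%nat -> 0 < g k) ->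
  ln (prodk g m) = sumk (fun k => ln (g k)) m.
Proof.
  induction m; intros H; simpl. apply ln_1.
  rewrite ln_mult. rewrite IHm. auto. intros; apply H; lia.
  apply prodk_pos; intros; apply H; lia. apply H; lia.
Qed.

Lemma prodk_div g h m : (forall k, (1 <= k <= m)%nat -> h k <> 0) ->
  prodk g m = prodk (fun k => g k / h k) m * prodk h m.
Proof.
  induction m; intros H; simpl. ring.
  rewrite IHm by (intros; apply H; lia).
  assert (h (S m) <> 0) by (apply H; lia). field; auto.
Qed.

Lemma sin_INR_PI k : sin (INR k * PI) = 0.
Proof. apply sin_eq_0_1. exists (Z.of_nat k). rewrite INR_IZR_INZ. auto. Qed.

Lemma finite_bound a T b (omega : nat -> R) i :
  0 < a -> 0 < T -> a < b ->
  (forall k, (1 <= k)%nat -> 0 < omega k /\ 2 * atan (omega k / a) = INR k * PI - omega k * T) ->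
  ln (snd (AB a (T / INR (S (2*i))) (-(b^2)) (S (2*i))) / snd (AB a (T / INR (S (2*i))) (-(a^2)) (S (2*i))))
  <= sumk (fun k => ln ((b^2 + omega k ^ 2) / (a^2 + omega k ^ 2))) (S i).
Proof.
  intros ha hT hab Hom.
  set (N := S (2*i)). set (c := T / INR N). set (m := S i).
  assert (hN : 0 < INR N) by (apply lt_0_INR; unfold N; lia).
  assert (hc : 0 < c) by (unfold c; apply Rdiv_lt_0_compat; lra).
  assert (Hch : forall k, {w | (1 <= k <= m)%nat -> 0 < w /\ phiN a c N w = INR k * PI}).
  { intros k. apply constructive_indefinite_description.
    destruct (le_lt_dec 1 k) as [h1|h1]; [destruct (le_lt_dec k m) as [h2|h2]|].
    - destruct (root_exists a T i k ha hT (conj h1 h2)) as [w Hw]. exists w. auto.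
    - exists 0. intros; lia.
    - exists 0. intros; lia. }
  set (rho := fun k => proj1_sig (Hch k)).
  assert (Hrho : forall k, (1 <= k <= m)%nat -> 0 < rho k /\ phiN a c N (rho k) = INR k * PI).
  { intros k hk. unfold rho. destruct (Hch k) as [w Hw]. simpl. auto. }
  set (f := fun u => snd (AB a c u N)).
  assert (Hf : Pd m f).
  { destruct (AB_Pd a c i) as [_ [_ [_ H]]]. exact H. }
  assert (Hroot : forall k, (1 <= k <= m)%nat -> f (rho k ^ 2) = 0).
  { intros k hk. destruct (Hrho k hk) as [hr hp].
    destruct (AB_polar a c (rho k) N ha) as [_ H2].
    fold (phiN a c N (rho k)) in H2. rewrite hp, sin_INR_PI, Rmult_0_r in H2.
    unfold f. apply Rmult_integral in H2. destruct H2; [lra|auto]. }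
  assert (Hdist : forall i0 j, (1 <= i0 <= m)%nat -> (1 <= j <= m)%nat -> i0 <> j -> rho i0 ^ 2 <> rho j ^ 2).
  { intros i0 j hi hj hij E.
    destruct (Hrho i0 hi) as [h1 p1], (Hrho j hj) as [h2 p2].
    assert (rho i0 = rho j) by nra.
    assert (INR i0 * PI = INR j * PI) by (rewrite <- p1, <- p2, H; auto).
    assert (INR i0 = INR j).
    { apply (Rmult_eq_reg_r PI); auto. pose proof PI_RGT_0; lra. }
    apply INR_eq in H1. auto. }
  destruct (Pd_factor m f (fun k => rho k ^ 2) Hf Hroot Hdist) as [C HC].
  assert (Hfa : f (-(a^2)) = 2 * a * (1 + c*a)^N).
  { destruct (AB_imag a c a N) as [E1 E2]. unfold f.
    replace (a - a) with 0 in E2 by ring.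
    assert (Hx : 2 * a * snd (AB a c (- a ^ 2) N) = 2 * a * (2 * a * (1 + c * a) ^ N)).
    { rewrite pow_i in E2 by lia. replace ((a+a)^2) with (4*a^2) in E1 by ring. nra. }
    apply Rmult_eq_reg_l in Hx; lra. }
  assert (Hfa0 : 0 < f (-(a^2))).
  { rewrite Hfa. apply Rmult_lt_0_compat; [lra|]. apply pow_lt. nra. }
  assert (Hne : forall k, (1 <= k <= m)%nat -> - a^2 - rho k ^2 <> 0).
  { intros k hk. nra. }
  assert (Hratio : f (-(b^2)) / f (-(a^2)) = prodk (fun k => (b^2 + rho k ^ 2) / (a^2 + rho k ^ 2)) m).
  { rewrite !HC. rewrite (prodk_div (fun k => - b ^ 2 - rho k ^ 2) (fun k => - a ^ 2 - rho k ^ 2) m Hne).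
    assert (HC0 : C * prodk (fun k => - a ^ 2 - rho k ^ 2) m <> 0).
    { rewrite <- HC. lra. }
    rewrite (prodk_ext (fun k => (- b ^ 2 - rho k ^ 2) / (- a ^ 2 - rho k ^ 2))
                       (fun k => (b^2 + rho k ^ 2) / (a^2 + rho k ^ 2))).
    - field. split; intro Hz; apply HC0; rewrite Hz; ring.
    - intros k hk. field. nra. }
  change (ln (f (-(b^2)) / f (-(a^2))) <= sumk (fun k => ln ((b^2 + omega k ^ 2) / (a^2 + omega k ^ 2))) m). rewrite Hratio.
  rewrite ln_prodk.
  2:{ intros k hk. apply Rdiv_lt_0_compat; nra. }
  apply sumk_le. intros k hk.
  destruct (Hrho k hk) as [hr hp]. destruct (Hom k ltac:(lia)) as [ho he].
  assert (Hge : omega k <= rho k).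
  { destruct (Rle_lt_dec (omega k) (rho k)) as [H|H]; auto. exfalso.
    unfold phiN in hp.
    assert (atan (c * rho k) <= c * rho k) by (apply atan_le_id; nra).
    assert (INR N * atan (c * rho k) <= INR N * (c * rho k)) by (apply Rmult_le_compat_l; lra).
    assert (INR N * (c * rho k) = rho k * T) by (unfold c; field; lra).
    assert (atan (rho k / a) <= atan (omega k / a)).
    { apply atan_le_of. unfold Rdiv. apply Rmult_le_compat_r; [|lra]. left; apply Rinv_0_lt_compat; lra. }
    nra. }
  apply ln_le. apply Rdiv_lt_0_compat; nra.
  assert (E : forall r, 0 <= r -> (b^2 + r)/(a^2 + r) = 1 + (b^2 - a^2)/(a^2+r)).
  { intros r0 hr0. field. nra. }
  rewrite !E by nra.
  apply Rplus_le_compat_l. unfold Rdiv. apply Rmult_le_compat_l; [nra|].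
  apply Rinv_le_contravar; nra.
Qed.

Lemma exp_pow_N x n : exp x ^ n = exp (INR n * x).
Proof.
  induction n. simpl. rewrite Rmult_0_l, exp_0. auto.
  rewrite <- tech_pow_Rmult, IHn, S_INR, <- exp_plus. f_equal. ring.
Qed.

Lemma ln_le_sub1 x : 0 < x -> ln x <= x - 1.
Proof.
  intros hx. rewrite <- (ln_exp (x - 1)). apply ln_le; auto.
  pose proof (exp_ineq1_le (x-1)). lra.
Qed.

Lemma ln1p_lower y : 0 <= y -> y - y^2 <= ln (1 + y).
Proof.
  intros hy.
  assert (H := ln_le_sub1 (/(1+y)) ltac:(apply Rinv_0_lt_compat; lra)).
  rewrite ln_Rinv in H by lra.
  assert (/ (1 + y) - 1 = - (y/(1+y))) by (field; lra).
  assert (y - y^2 <= y/(1+y)).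
  { apply (Rmult_le_reg_r (1+y)); [lra|]. unfold Rdiv. rewrite Rmult_assoc, Rinv_l by lra. nra. }
  lra.
Qed.

Lemma pow_lower y n : 0 <= y -> exp (INR n * y) * (1 - INR n * y^2) <= (1 + y)^n.
Proof.
  intros hy.
  rewrite <- (exp_ln ((1+y)^n)) by (apply pow_lt; lra).
  rewrite ln_pow by lra.
  assert (H1 := ln1p_lower y hy).
  assert (0 <= INR n) by apply pos_INR.
  assert (INR n * (y - y^2) <= INR n * ln (1+y)) by (apply Rmult_le_compat_l; lra).
  assert (exp (INR n * (y - y^2)) <= exp (INR n * ln (1+y))).
  { destruct H0 as [H0|H0]. left; apply exp_increasing; auto. rewrite H0; lra. }
  replace (INR n * (y - y^2)) with (INR n * y + (- (INR n * y^2))) in H2 by ring.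
  rewrite exp_plus in H2.
  pose proof (exp_ineq1_le (- (INR n * y ^ 2))).
  pose proof (exp_pos (INR n * y)).
  nra.
Qed.

Lemma pow_upper y n : -1 <= y -> (1 + y)^n <= exp (INR n * y).
Proof.
  intros hy. rewrite <- exp_pow_N. apply pow_incr. pose proof (exp_ineq1_le y). lra.
Qed.

Lemma large_N a T b : 0 < a -> 0 < T -> a < b ->
  exists i, T * (b - a) <
    ln (snd (AB a (T / INR (S (2*i))) (-(b^2)) (S (2*i))) / snd (AB a (T / INR (S (2*i))) (-(a^2)) (S (2*i)))).
Proof.
  intros ha hT hab.
  set (E := exp (b*T)).
  assert (hE : 1 < E) by (pose proof (exp_ineq1 (b*T) ltac:(nra)); unfold E; nra).
  set (eta := (b-a)^2 * (E - /E) / ((a+b)^2 * E)).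
  assert (heta : 0 < eta).
  { unfold eta. apply Rdiv_lt_0_compat; [|apply Rmult_lt_0_compat; [apply pow_lt; lra|lra]]. apply Rmult_lt_0_compat; [apply pow_lt; lra|].
    assert (/E < 1). { rewrite <- Rinv_1. apply Rinv_lt_contravar; lra. } lra. }
  destruct (INR_unbounded (b*T + b^2*T^2/eta)) as [n Hn].
  exists n.
  set (N := S (2*n)). set (c := T / INR N).
  assert (hNn : INR n <= INR N) by (apply le_INR; unfold N; lia).
  assert (hN : 0 < INR N).
  { assert (0 <= b^2*T^2/eta) by (apply Rdiv_le_0_compat; nra). nra. }
  assert (hc : 0 < c) by (unfold c; apply Rdiv_lt_0_compat; lra).
  assert (hcN : c * INR N = T) by (unfold c; field; lra).
  destruct (AB_imag a c a N) as [Ea1 Ea2].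
  destruct (AB_imag a c b N) as [Eb1 Eb2].
  set (Ba := snd (AB a c (-(a^2)) N)) in *.
  set (Bb := snd (AB a c (-(b^2)) N)) in *.
  replace (a - a) with 0 in Ea2 by ring. rewrite pow_i in Ea2 by lia.
  assert (HBa : Ba = 2*a*(1+c*a)^N) by nra.
  assert (HBb : 2 * b * Bb = (a+b)^2*(1+c*b)^N - (a-b)^2*(1-c*b)^N) by nra.
  assert (U1 : (1+c*a)^N <= exp (a*T)).
  { replace (a*T) with (INR N * (c*a)) by (rewrite <- hcN; ring). apply pow_upper. nra. }
  assert (hcb : c * b <= 1).
  { unfold c. apply (Rmult_le_reg_r (INR N)); auto. replace (T / INR N * b * INR N) with (b*T) by (field; lra).
    rewrite Rmult_1_l.
    assert (0 <= b^2*T^2/eta) by (apply Rdiv_le_0_compat; nra). nra. }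
  assert (U2 : (1-c*b)^N <= / E).
  { unfold E. rewrite <- exp_Ropp. replace (- (b*T)) with (INR N * (-(c*b))) by (rewrite <- hcN; ring).
    replace (1 - c*b) with (1 + (-(c*b))) by ring. apply pow_upper. nra. }
  assert (L1 : E * (1 - b^2*T^2/INR N) <= (1 + c*b)^N).
  { assert (H := pow_lower (c*b) N ltac:(nra)).
    replace (INR N * (c*b)) with (b*T) in H by (rewrite <- hcN; ring).
    replace (INR N * (c*b)^2) with (b^2*T^2/INR N) in H by (rewrite <- hcN; field; lra). exact H. }
  assert (Hq : b^2*T^2/INR N < eta).
  { apply (Rmult_lt_reg_r (INR N)); auto. unfold Rdiv. rewrite Rmult_assoc, Rinv_l by lra.
    assert (b^2*T^2 = (b^2*T^2/eta) * eta) by (field; lra).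
    assert (b^2*T^2/eta < INR N).
    { assert (0 < b * T) by nra. lra. }
    nra. }
  set (q := b^2*T^2/INR N) in *.
  assert (hq0 : 0 <= q) by (unfold q; apply Rdiv_le_0_compat; nra).
  assert (Key : 4*a*b*E < (a+b)^2 * E * (1 - q) - (b-a)^2 * /E).
  { assert (hab2 : 0 < (a+b)^2) by (apply pow_lt; lra).
    assert ((a+b)^2 * E * q < (a+b)^2*E*eta) by (apply Rmult_lt_compat_l; nra).
    assert ((a+b)^2*E*eta = (b-a)^2 * (E - /E)) by (unfold eta; field; split; lra).
    nra. }
  assert (HBb2 : 2*b*Bb > 4*a*b*E).
  { rewrite HBb. assert (0 <= (1 - c*b)^N) by (apply pow_le; lra).
    replace ((a-b)^2) with ((b-a)^2) by ring.
    assert ((b-a)^2 * (1-c*b)^N <= (b-a)^2 * /E) by (apply Rmult_le_compat_l; nra).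
    assert ((a+b)^2 * (E * (1-q)) <= (a+b)^2 * (1+c*b)^N) by (apply Rmult_le_compat_l; nra).
    nra. }
  assert (hBb : 2*a*E < Bb) by nra.
  assert (hpa : 0 < (1+c*a)^N) by (apply pow_lt; nra).
  assert (hBa0 : 0 < Ba) by (rewrite HBa; nra).
  rewrite <- (ln_exp (T*(b-a))). apply ln_increasing; [apply exp_pos|].
  apply (Rmult_lt_reg_r Ba); auto. unfold Rdiv. rewrite Rmult_assoc, Rinv_l, Rmult_1_r by lra.
  rewrite HBa.
  assert (exp (T*(b-a)) * exp (a*T) = E) by (unfold E; rewrite <- exp_plus; f_equal; ring).
  assert (exp (T*(b-a)) * (2*a*(1+c*a)^N) <= 2*a*E).
  { assert (0 < exp (T*(b-a))) by apply exp_pos.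
    assert (exp (T*(b-a)) * (1+c*a)^N <= exp (T*(b-a)) * exp (a*T)) by (apply Rmult_le_compat_l; lra).
    replace (exp (T * (b - a)) * (2 * a * (1 + c * a) ^ N)) with (2*a*(exp (T*(b-a)) * (1+c*a)^N)) by ring.
    apply Rmult_le_compat_l; lra. }
  lra.
Qed.

Section Int.
Variables (a b : R).
Hypothesis ha : 0 < a.
Hypothesis hab : a < b.

Definition Fanti (w : R) := w * ln ((w^2 + b^2)/(w^2 + a^2)) + 2*b*atan (w/b) - 2*a*atan (w/a).

Lemma Fanti_odd w : Fanti (-w) = - Fanti w.
Proof.
  unfold Fanti. replace ((-w)^2) with (w^2) by ring.
  unfold Rdiv. rewrite !Ropp_mult_distr_l_reverse, !atan_opp. ring.
Qed.

Lemma atan_near_pi2 x : 0 < x -> Rabs (atan x - PI/2) <= / x.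
Proof.
  intros hx. rewrite <- (Rinv_inv x) at 1. rewrite atan_inv by (apply Rinv_0_lt_compat; lra).
  replace (PI / 2 - atan (/ x) - PI / 2) with (- atan (/x)) by ring.
  rewrite Rabs_Ropp.
  assert (0 < /x) by (apply Rinv_0_lt_compat; lra).
  assert (0 <= atan (/x)) by (rewrite <- atan_0; apply atan_le_of; lra).
  rewrite Rabs_right by lra. apply atan_le_id; lra.
Qed.

Definition Kc := (b^2 - a^2) + 2*b*b + 2*a*a.

Lemma Fanti_bound w : 1 <= w -> Rabs (Fanti w - PI*(b-a)) <= Kc / w.
Proof.
  intros hw. unfold Fanti, Kc.
  set (L := ln ((w ^ 2 + b ^ 2) / (w ^ 2 + a ^ 2))).
  assert (hL0 : 0 <= L).
  { unfold L. rewrite <- ln_1. apply ln_le; [lra|].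
    apply (Rmult_le_reg_r (w^2+a^2)); [nra|]. unfold Rdiv. rewrite Rmult_assoc, Rinv_l by nra. nra. }
  assert (hL1 : L <= (b^2 - a^2) / (w^2 + a^2)).
  { unfold L. eapply Rle_trans. apply ln_le_sub1. apply Rdiv_lt_0_compat; nra.
    right. field. nra. }
  assert (hL2 : w * L <= (b^2 - a^2) / w).
  { apply Rle_trans with (w * ((b^2 - a^2) / (w^2 + a^2))). apply Rmult_le_compat_l; lra.
    apply (Rmult_le_reg_r (w * (w^2+a^2))); [nra|].
    replace (w * ((b ^ 2 - a ^ 2) / (w ^ 2 + a ^ 2)) * (w * (w ^ 2 + a ^ 2))) with ((b^2-a^2)*w^2) by (field; nra).
    replace ((b ^ 2 - a ^ 2) / w * (w * (w ^ 2 + a ^ 2))) with ((b^2-a^2)*(w^2+a^2)) by (field; nra).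
    assert (0 < b^2 - a^2) by nra. apply Rmult_le_compat_l; nra. }
  assert (H1 := atan_near_pi2 (w/b) ltac:(apply Rdiv_lt_0_compat; lra)).
  assert (H2 := atan_near_pi2 (w/a) ltac:(apply Rdiv_lt_0_compat; lra)).
  replace (/ (w/b)) with (b/w) in H1 by (field; lra).
  replace (/ (w/a)) with (a/w) in H2 by (field; lra).
  replace (w * L + 2 * b * atan (w / b) - 2 * a * atan (w / a) - PI * (b - a))
    with (w * L + 2*b*(atan (w/b) - PI/2) - 2*a*(atan (w/a) - PI/2)) by field.
  eapply Rle_trans. apply Rabs_triang.
  eapply Rle_trans. apply Rplus_le_compat. apply Rabs_triang. rewrite Rabs_Ropp. apply Rle_refl.
  rewrite !Rabs_mult, (Rabs_right w), (Rabs_right 2), (Rabs_right b), (Rabs_right a), (Rabs_right L) by lra.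
  assert (2*b*Rabs (atan (w / b) - PI / 2) <= 2*b*(b/w)) by (apply Rmult_le_compat_l; lra).
  assert (2*a*Rabs (atan (w / a) - PI / 2) <= 2*a*(a/w)) by (apply Rmult_le_compat_l; lra).
  replace (((b ^ 2 - a ^ 2) + 2 * b * b + 2 * a * a) / w) with ((b^2-a^2)/w + 2*b*(b/w) + 2*a*(a/w)) by (field; lra).
  lra.
Qed.

Lemma Fanti_lim_p : filterlim Fanti (Rbar_locally p_infty) (locally (PI*(b-a))).
Proof.
  apply (is_lim_spec Fanti p_infty (PI*(b-a))).
  intros eps. assert (hK : 0 < Kc) by (unfold Kc; nra).
  exists (Rmax 1 (Kc/eps)). intros w hw.
  assert (h1 : 1 < w) by (eapply Rle_lt_trans; [apply Rmax_l|exact hw]).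
  assert (h2 : Kc/eps < w) by (eapply Rle_lt_trans; [apply Rmax_r|exact hw]).
  eapply Rle_lt_trans. apply Fanti_bound; lra.
  destruct eps as [e he]; simpl in *.
  apply (Rmult_lt_reg_r w); [lra|]. unfold Rdiv. rewrite Rmult_assoc, Rinv_l, Rmult_1_r by lra.
  apply (Rmult_lt_reg_r (/e)). apply Rinv_0_lt_compat; lra.
  replace (e * w * / e) with w by (field; lra). exact h2.
Qed.

Lemma Fanti_lim_m : filterlim Fanti (Rbar_locally m_infty) (locally (- (PI*(b-a)))).
Proof.
  apply (is_lim_spec Fanti m_infty (- (PI*(b-a)))).
  intros eps. assert (hK : 0 < Kc) by (unfold Kc; nra).
  exists (- Rmax 1 (Kc/eps)). intros w hw.
  assert (h1 : 1 < -w) by (assert (1 <= Rmax 1 (Kc/eps)) by apply Rmax_l; lra).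
  assert (h2 : Kc/eps < -w) by (assert (Kc/eps <= Rmax 1 (Kc/eps)) by apply Rmax_r; lra).
  replace (Fanti w - - (PI * (b - a))) with (- (Fanti (-w) - PI*(b-a))).
  2:{ rewrite Fanti_odd. ring. }
  rewrite Rabs_Ropp.
  eapply Rle_lt_trans. apply Fanti_bound; lra.
  destruct eps as [e he]; simpl in *.
  apply (Rmult_lt_reg_r (-w)); [lra|]. unfold Rdiv. rewrite Rmult_assoc, Rinv_l, Rmult_1_r by lra.
  apply (Rmult_lt_reg_r (/e)). apply Rinv_0_lt_compat; lra.
  replace (e * - w * / e) with (-w) by (field; lra). exact h2.
Qed.

End Int.

Lemma Csh_value n0 a P : 0 < n0 -> 0 < a -> 0 < P ->
  Csh n0 a P = (sqrt (a^2 + 4*a*P/n0) - a) / 2.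
Proof.
  intros hn0 ha hP.
  set (b := sqrt (a^2 + 4*a*P/n0)).
  assert (hd : 0 < 4*a*P/n0) by (apply Rdiv_lt_0_compat; nra).
  assert (hb2 : b^2 = a^2 + 4*a*P/n0) by (unfold b; rewrite pow2_sqrt; nra).
  assert (hb0 : 0 <= b) by (unfold b; apply sqrt_pos).
  assert (hab : a < b) by nra.
  set (g := fun w => ln (1 + 2 * P * a / (a ^ 2 + w ^ 2) / (n0 / 2))).
  assert (Hd : forall w, is_derive (Fanti a b) w (g w)).
  { intros w. unfold Fanti, g.
    assert (E : 1 + 2 * P * a / (a ^ 2 + w ^ 2) / (n0 / 2) = (w^2 + b^2)/(w^2+a^2)).
    { rewrite hb2. field. nra. }
    rewrite E. auto_derive.
    - repeat split; try nra. apply Rmult_lt_0_compat; [nra|]. apply Rinv_0_lt_compat; nra.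
    - replace ((w * (w * 1) + b * (b * 1)) * / (w * (w * 1) + a * (a * 1))) with ((w ^ 2 + b ^ 2) / (w ^ 2 + a ^ 2)) by (field; nra).
      set (L := ln ((w ^ 2 + b ^ 2) / (w ^ 2 + a ^ 2))).
      field. repeat split; try nra. }
  assert (HD : Derive (Fanti a b) = g).
  { apply functional_extensionality. intros w. apply is_derive_unique. apply Hd. }
  assert (HI : is_RInt_gen g (Rbar_locally m_infty) (Rbar_locally p_infty) (PI*(b-a) - - (PI*(b-a)))).
  { rewrite <- HD. apply is_RInt_gen_Derive.
    - apply filter_forall. intros [x y] z _. exists (g z). apply Hd.
    - apply filter_forall. intros [x y] z _. rewrite HD.
      apply (@ex_derive_continuous R_AbsRing R_NormedModule g z).
      unfold g. auto_derive. repeat split; try nra.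
      assert (0 < / (a*(a*1) + z*(z*1))) by (apply Rinv_0_lt_compat; nra).
      assert (0 < /(n0/2)) by (apply Rinv_0_lt_compat; lra).
      assert (0 < 2*P*a) by nra.
      assert (0 < 2 * P * a * / (a * (a * 1) + z * (z * 1))) by (apply Rmult_lt_0_compat; lra).
      assert (0 < 2 * P * a * / (a * (a * 1) + z * (z * 1)) * / (n0/2)) by (apply Rmult_lt_0_compat; lra).
      lra.
    - apply Fanti_lim_m; auto.
    - apply Fanti_lim_p; auto. }
  unfold Csh. fold g.
  rewrite (is_RInt_gen_unique g _ HI).
  fold b. field. apply PI_neq0.
Qed.

Lemma sum_n_sumk (g : nat -> R) i : sum_n (fun n => g (S n)) i = sumk g (S i).
Proof.
  induction i.
  - rewrite sum_O. simpl. ring.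
  - rewrite sum_Sn, IHi. simpl. unfold plus; simpl. ring.
Qed.

Lemma telescope_series : ex_series (fun n => / ((INR n + 1) * (INR n + 2))).
Proof.
  exists 1.
  assert (Hs : forall N, sum_n (fun n => / ((INR n + 1) * (INR n + 2))) N = 1 - / (INR N + 2)).
  { induction N.
    - rewrite sum_O. simpl. field.
    - rewrite sum_Sn, IHN. unfold plus; simpl.
      assert (0 <= INR N) by apply pos_INR. change (match N with 0%nat => 1 | S _ => INR N + 1 end) with (INR (S N)). rewrite S_INR. field. lra. }
  change (is_lim_seq (sum_n (fun n => / ((INR n + 1) * (INR n + 2)))) 1).
  apply is_lim_seq_spec. intros eps.
  destruct (INR_unbounded (/ eps)) as [M HM].
  exists M. intros n hn. rewrite Hs.
  assert (hM : INR M <= INR n) by (apply le_INR; lia).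
  destruct eps as [e he]; simpl in *.
  assert (0 <= INR M) by apply pos_INR.
  replace (1 - / (INR n + 2) - 1) with (- / (INR n + 2)) by ring.
  rewrite Rabs_Ropp, Rabs_right by (left; apply Rinv_0_lt_compat; lra).
  apply Rlt_trans with (/ INR n).
  - apply Rinv_lt_contravar; [|lra]. assert (0 < INR n).
    { apply Rlt_le_trans with (INR M); auto. apply Rle_lt_trans with (/e); auto.
      left; apply Rinv_0_lt_compat; lra. }
    nra.
  - assert (0 < /e) by (apply Rinv_0_lt_compat; lra).
    rewrite <- (Rinv_inv e). apply Rinv_lt_contravar; [nra|lra].
Qed.

Theorem theorem2 (T n0 alpha : R) (omega : nat -> R)
  (hT : 0 < T) (hn0 : 0 < n0) (halpha : 0 < alpha)
  (homega : forall k : nat, (1 <= k)%nat -> is_omega T alpha k (omega k)) :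
  exists delta : R, 0 < delta /\
    forall P : R, 0 < P < delta -> CT T n0 alpha P omega > Csh n0 alpha P.
Proof.
  exists 1. split; [lra|]. intros P [hP _].
  set (a := alpha) in *.
  set (b := sqrt (a^2 + 4*a*P/n0)).
  assert (hd : 0 < 4*a*P/n0) by (apply Rdiv_lt_0_compat; nra).
  assert (hb2 : b^2 = a^2 + 4*a*P/n0) by (unfold b; rewrite pow2_sqrt; nra).
  assert (hb0 : 0 <= b) by (unfold b; apply sqrt_pos).
  assert (hab : a < b) by nra.
  rewrite Csh_value by auto. fold b.
  set (t := fun n => ln (1 + lam a P (omega (S n)) / (n0 / 2))).
  assert (Ht : forall n, t n = ln ((b^2 + omega (S n) ^ 2) / (a^2 + omega (S n) ^ 2))).
  { intros n. unfold t, lam. f_equal. rewrite hb2. field. split; [lra|].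
    destruct (homega (S n) ltac:(lia)) as [ho _]. nra. }
  assert (Hom : forall k, (1 <= k)%nat -> 0 < omega k /\ 2 * atan (omega k / a) = INR k * PI - omega k * T).
  { intros k hk. exact (homega k hk). }
  assert (Hlow : forall n, INR n * PI / T <= omega (S n)).
  { intros n. destruct (Hom (S n) ltac:(lia)) as [ho he].
    pose proof (atan_bound (omega (S n) / a)). rewrite S_INR in he.
    apply (Rmult_le_reg_r T); auto. unfold Rdiv. rewrite Rmult_assoc, Rinv_l, Rmult_1_r by lra. nra. }
  assert (Ht0 : forall n, 0 <= t n).
  { intros n. rewrite Ht. rewrite <- ln_1. destruct (Hom (S n) ltac:(lia)) as [ho _].
    apply ln_le; [lra|]. apply (Rmult_le_reg_r (a^2 + omega (S n)^2)); [nra|].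
    unfold Rdiv. rewrite Rmult_assoc, Rinv_l by nra. nra. }
  set (mu := Rmin (a^2) ((PI/T)^2)).
  assert (hPI := PI_RGT_0).
  assert (hmu : 0 < mu).
  { unfold mu. apply Rmin_pos. nra. apply pow_lt. apply Rdiv_lt_0_compat; lra. }
  set (K := 6 * (b^2 - a^2) / mu).
  assert (Hex : ex_series t).
  { apply (ex_series_le t (fun n => K * / ((INR n + 1) * (INR n + 2)))).
    - intros n. unfold norm; simpl. unfold abs; simpl. rewrite Rabs_right by (apply Rle_ge, Ht0).
      rewrite Ht. destruct (Hom (S n) ltac:(lia)) as [ho _].
      set (w := omega (S n)) in *.
      eapply Rle_trans. apply ln_le_sub1. apply Rdiv_lt_0_compat; nra.
      replace ((b ^ 2 + w ^ 2) / (a ^ 2 + w ^ 2) - 1) with ((b^2 - a^2) / (a^2 + w^2)) by (field; nra).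
      assert (hn : 0 <= INR n) by apply pos_INR.
      assert (hw : INR n * PI / T <= w) by apply Hlow.
      assert (hw2 : (PI/T)^2 * INR n ^ 2 <= w^2).
      { replace ((PI/T)^2 * INR n ^ 2) with ((INR n * PI / T)^2) by (field; lra).
        apply pow_incr. split; auto. apply Rmult_le_pos. nra. left; apply Rinv_0_lt_compat; lra. }
      assert (hm1 : mu <= a^2) by apply Rmin_l.
      assert (hm2 : mu <= (PI/T)^2) by apply Rmin_r.
      assert (hden : mu * (1 + INR n ^ 2) <= a^2 + w^2) by nra.
      assert (hpoly : (INR n + 1) * (INR n + 2) <= 6 * (1 + INR n ^ 2)) by nra.
      assert (hd1 : 0 < b^2 - a^2) by nra.
      unfold K. unfold Rdiv.
      apply Rle_trans with ((b^2 - a^2) * / (mu * (1 + INR n ^ 2))).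
      + apply Rmult_le_compat_l; [lra|]. apply Rinv_le_contravar; [nra|lra].
      + replace (6 * (b ^ 2 - a ^ 2) * / mu * / ((INR n + 1) * (INR n + 2))) with
          ((b^2 - a^2) * / (mu * ((INR n + 1) * (INR n + 2) / 6))) by (field; nra).
        apply Rmult_le_compat_l; [lra|]. apply Rinv_le_contravar; [nra|].
        apply Rmult_le_compat_l; lra.
    - destruct telescope_series as [l Hl]. exists (K * l).
      apply (is_series_scal_l K _ l Hl). }
  assert (Hser : forall i, sum_n t i <= Series t).
  { intros i. apply is_lim_seq_incr_compare.
    - apply Series_correct in Hex. exact Hex.
    - intros n. rewrite sum_Sn. unfold plus; simpl. pose proof (Ht0 (S n)). lra. }
  destruct (large_N a T b halpha hT hab) as [i Hi].
  pose proof (finite_bound a T b omega i halpha hT hab Hom) as Hf.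
  assert (Hsum : sum_n t i = sumk (fun k => ln ((b^2 + omega k ^ 2) / (a^2 + omega k ^ 2))) (S i)).
  { rewrite <- sum_n_sumk. apply sum_n_ext. intros n. apply Ht. }
  unfold CT. fold a. fold t.
  assert (T * (b - a) < Series t) by (pose proof (Hser i); lra).
  apply Rlt_gt.
  apply (Rmult_lt_reg_l (2*T)); [lra|].
  replace (2 * T * ((b - a) / 2)) with (T * (b - a)) by field.
  replace (2 * T * (/ (2 * T) * Series t)) with (Series t) by (field; lra).
  auto.
Qed.
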